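(* Let $\delta_1,\delta_2\in\mathcal{D}^{LSL}$ with $\delta_1\ne\delta_2$ and let $\lambda\in(0,1)$. Then $$\tau\big(\lambda S_{\delta_1}+(1-\lambda)S_{\delta_2}\big)<\lambda\,\tau(S_{\delta_1})+(1-\lambda)\,\tau(S_{\delta_2}).$$
   Context: Let $\mathcal{D}$ be the set of all functions $\delta:[0,1]\to[0,1]$ with $\delta(u)\le u$, $\delta(1)=1$, $\delta$ non-decreasing and 2-Lipschitz. Let $\mathcal{D}^{LSL}$ be the set of $\delta\in\mathcal{D}$ such that $x\mapsto\delta(x)/x$ is non-decreasing and $x\mapsto\delta(x)/x^2$ is non-increasing on $(0,1]$. For $\delta\in\mathcal{D}^{LSL}$, $S_\delta(x,y)=y\,\delta(x)/x$ if $y\le x$ and $x\,\delta(y)/y$ otherwise (convention $0/0:=0$); it is a copula. For a copula $C$ with associated doubly stochastic measure $\mu_C$ (so $\mu_C([0,x]\times[0,y])=C(x,y)$), Kendall's tau is $\tau(C)=4\int_{[0,1]^2}C\,d\mu_C-1$. *)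

(* Defs.v *)
From HB Require Import structures.
From mathcomp Require Import all_boot all_order all_algebra.
From mathcomp Require Import all_classical all_reals all_analysis.
Set Implicit Arguments. Unset Strict Implicit. Unset Printing Implicit Defensive.
Import Order.TTheory GRing.Theory Num.Theory.
Local Open Scope classical_set_scope.
Local Open Scope ring_scope.

Section Defs.
Variable R : realType.

(* delta in the class D (only the values on [0,1] matter) *)
Definition in_D (d : R -> R) : Prop :=
  [/\ (forall u, 0 <= u <= 1 -> 0 <= d u <= 1),
      (forall u, 0 <= u <= 1 -> d u <= u),
      d 1 = 1,
      (forall u v, 0 <= u -> u <= v -> v <= 1 -> d u <= d v) &
      (forall u v, 0 <= u <= 1 -> 0 <= v <= 1 -> `|d u - d v| <= 2 * `|u - v|)].

Definition in_DLSL (d : R -> R) : Prop :=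
  [/\ in_D d,
      (forall x y, 0 < x -> x <= y -> y <= 1 -> d x / x <= d y / y) &
      (forall x y, 0 < x -> x <= y -> y <= 1 -> d y / (y ^+ 2) <= d x / (x ^+ 2))].

(* S_delta; note x / 0 = 0 in MathComp, matching the convention 0/0 := 0 *)
Definition S_delta (d : R -> R) (x y : R) : R :=
  if y <= x then y * (d x / x) else x * (d y / y).

Definition mixC (l : R) (C1 C2 : R -> R -> R) (x y : R) : R :=
  l * C1 x y + (1 - l) * C2 x y.

Definition unit_sq : set (R * R) := `[0, 1] `*` `[0, 1].

Definition assoc_measure (mu : {measure set (R * R)%type -> \bar R})
  (C : R -> R -> R) : Prop :=
  mu setT = 1%E /\
  forall x y, 0 <= x <= 1 -> 0 <= y <= 1 ->
    mu (`[0, x] `*` `[0, y]) = (C x y)%:E.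

Definition kendall_tau (mu : {measure set (R * R)%type -> \bar R})
  (C : R -> R -> R) : R :=
  4 * Rintegral mu unit_sq (fun z => C z.1 z.2) - 1.

End Defs.

(* Main.v *)
Require Import Defs.
From HB Require Import structures.
From mathcomp Require Import all_boot all_order all_algebra.
From mathcomp Require Import all_classical all_reals all_analysis.
From mathcomp Require Import measurable_realfun ring lra zify.
Import Order.TTheory GRing.Theory Num.Theory.
Local Open Scope classical_set_scope.
Local Open Scope ring_scope.

Section Main.
Variable R : realType.
Implicit Types d : R -> R.
Local Notation T := ((R * R)%type).

Definition ff d (t : R) := d t / t.

Lemma ff0 d : ff d 0 = 0.
Proof. by rewrite /ff invr0 mulr0. Qed.

Lemma ff_bnd d : in_D d -> forall t, 0 <= t <= 1 -> 0 <= ff d t <= 1.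
Proof.
case=> Hr Hle _ _ _ t /andP[t0 t1]; rewrite /ff.
have tt : 0 <= t <= 1 by rewrite t0 t1.
have /andP[dt0 dt1] := Hr t tt.
have := Hle t tt => dtt.
case: (eqVneq t 0) => [->|tn0]; first by rewrite invr0 mulr0 lexx ler01.
have tp : 0 < t by rewrite lt_neqAle eq_sym tn0 t0.
by rewrite divr_ge0 //= ler_pdivrMr // mul1r.
Qed.
Arguments ff_bnd {d}.

Lemma ff_mono d : in_DLSL d -> forall x y, 0 <= x -> x <= y -> y <= 1 -> ff d x <= ff d y.
Proof.
case=> HD H1 _ x y x0 xy y1.
case: (eqVneq x 0) => [->|xn0].
  rewrite ff0; have : 0 <= y <= 1 by rewrite (le_trans x0 xy) y1.
  by move/(ff_bnd HD)/andP => [].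
have xp : 0 < x by rewrite lt_neqAle eq_sym xn0 x0.
exact: H1.
Qed.
Arguments ff_mono {d}.

Lemma ff_lip d : in_DLSL d -> forall x y, 0 < x -> x <= y -> y <= 1 ->
  ff d y * x <= ff d x * y.
Proof.
case=> HD _ H2 x y xp xy y1.
have yp : 0 < y by apply: lt_le_trans xy.
have H := H2 x y xp xy y1.
have e1 : ff d y * x = d y / (y ^+ 2) * (x * y).
  by rewrite /ff; field; rewrite gt_eqF.
have e2 : ff d x * y = d x / (x ^+ 2) * (x * y).
  by rewrite /ff; field; rewrite gt_eqF.
rewrite e1 e2 ler_wpM2r // mulr_ge0 // ltW //.
Qed.
Arguments ff_lip {d}.

Lemma S_sym d x y : S_delta d x y = S_delta d y x.
Proof.
rewrite /S_delta; case: (lerP y x) => hyx; case: (lerP x y) => hxy //.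
- by have -> : x = y by apply/eqP; rewrite eq_le hxy hyx.
- by have := lt_trans hyx hxy; rewrite ltxx.
Qed.

Lemma S_lip1 d : in_DLSL d -> forall x x' y, 0 <= x -> x <= x' -> x' <= 1 ->
  0 <= y <= 1 -> 0 <= S_delta d x' y - S_delta d x y <= x' - x.
Proof.
move=> H x x' y x0 xx' x'1 /andP[y0 y1].
have HD : in_D d by case: H.
have fb t : 0 <= t <= 1 -> 0 <= ff d t <= 1 by apply: ff_bnd.
rewrite /S_delta -!/(ff d _).
case: (lerP y x) => hyx; case: (lerP y x') => hyx'.
- case: (eqVneq x 0) => [x00|xn0].
    have -> : y = 0 by apply/eqP; rewrite eq_le y0 andbT -x00.
    by rewrite !mul0r subrr lexx subr_ge0 xx'.
  have xp : 0 < x by rewrite lt_neqAle eq_sym xn0 x0.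
  have m := ff_mono H _ _ x0 xx' x'1.
  have lp := ff_lip H _ _ xp xx' x'1.
  have /andP[fx0 fx1] : 0 <= ff d x <= 1 by apply: fb; rewrite x0 (le_trans xx' x'1).
  by apply/andP; split; nra.
- by have := lt_le_trans hyx' (le_trans hyx xx'); rewrite ltxx.
- have yp : 0 < y by apply: le_lt_trans hyx.
  have m := ff_mono H _ _ (ltW yp) hyx' x'1.
  have lp := ff_lip H _ _ yp hyx' x'1.
  have /andP[fy0 fy1] : 0 <= ff d y <= 1 by apply: fb; rewrite y0 y1.
  by apply/andP; split; nra.
- have /andP[fy0 fy1] : 0 <= ff d y <= 1 by apply: fb; rewrite y0 y1.
  by apply/andP; split; nra.
Qed.
Arguments S_lip1 {d}.

Lemma S_lipx d : in_DLSL d -> forall x x' y, 0 <= x <= 1 -> 0 <= x' <= 1 ->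
  0 <= y <= 1 -> `|S_delta d x y - S_delta d x' y| <= `|x - x'|.
Proof.
move=> H x x' y /andP[x0 x1] /andP[x'0 x'1] hy.
case: (leP x x') => h.
  have /andP[a b] := S_lip1 H _ _ _ x0 h x'1 hy.
  by rewrite distrC (ger0_norm a) distrC ger0_norm // subr_ge0.
have /andP[a b] := S_lip1 H _ _ _ x'0 (ltW h) x1 hy.
by rewrite (ger0_norm a) ger0_norm // subr_ge0 ltW.
Qed.
Arguments S_lipx {d}.

Lemma S_lip d : in_DLSL d -> forall x y x' y', 0 <= x <= 1 -> 0 <= y <= 1 ->
  0 <= x' <= 1 -> 0 <= y' <= 1 ->
  `|S_delta d x y - S_delta d x' y'| <= `|x - x'| + `|y - y'|.
Proof.
move=> H x y x' y' hx hy hx' hy'.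
have -> : S_delta d x y - S_delta d x' y' =
  (S_delta d x y - S_delta d x' y) + (S_delta d x' y - S_delta d x' y') by ring.
apply: (le_trans (ler_normD _ _)); apply: lerD; first exact: S_lipx.
rewrite (S_sym d x' y) (S_sym d x' y'); exact: S_lipx.
Qed.
Arguments S_lip {d}.

Lemma S_ge0 d : in_D d -> forall x y, 0 <= x <= 1 -> 0 <= y <= 1 -> 0 <= S_delta d x y.
Proof.
move=> H x y /andP[x0 x1] /andP[y0 y1]; rewrite /S_delta -!/(ff d _).
have hx : 0 <= x <= 1 by rewrite x0 x1.
have hy : 0 <= y <= 1 by rewrite y0 y1.
case/andP: (ff_bnd H x hx) => ? _; case/andP: (ff_bnd H y hy) => ? _.
by case: ifP => _; apply: mulr_ge0.
Qed.
Arguments S_ge0 {d}.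

Lemma S_0y d y : S_delta d 0 y = 0.
Proof. by rewrite /S_delta -!/(ff d _) ff0; case: ifP => _; rewrite ?mulr0 ?mul0r. Qed.

Lemma S_x0 d x : S_delta d x 0 = 0.
Proof. by rewrite /S_delta -!/(ff d _) ff0; case: ifP => _; rewrite ?mulr0 ?mul0r. Qed.

Lemma S_11 d : in_D d -> S_delta d 1 1 = 1.
Proof. by case=> _ _ d1 _ _; rewrite /S_delta lexx d1 divr1 mulr1. Qed.

Lemma S_grid d1 d2 (n a b : nat) : (0 < n)%N ->
  S_delta d1 (a%:R / n%:R) (b%:R / n%:R) - S_delta d2 (a%:R / n%:R) (b%:R / n%:R) =
  (minn a b)%:R / n%:R * (ff d1 ((maxn a b)%:R / n%:R) - ff d2 ((maxn a b)%:R / n%:R)).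
Proof.
move=> n0; have np : 0 < n%:R :> R by rewrite ltr0n.
rewrite /S_delta -!/(ff _ _) ler_pM2r ?invr_gt0 // ler_nat.
by case: (leqP b a) => h; ring.
Qed.

Lemma S_meas (d : R -> R) (D : set T) : in_DLSL d -> measurable D ->
  (forall z, D z -> 0 <= z.1 <= 1 /\ 0 <= z.2 <= 1) ->
  measurable_fun D (fun z => S_delta d z.1 z.2).
Proof.
move=> H mD HD.
have HD' : in_D d by case: H.
set F := fun t : R => ff d (Num.min (Num.max t 0) 1).
have Fm : {homo F : s t / s <= t}.
  move=> s t st; rewrite /F; apply: ff_mono => //.
  - by rewrite le_min ler01 le_max lexx orbT.
  - by apply: le_min2 => //; apply: le_max2.
  - by rewrite ge_min lexx orbT.
have mg : measurable_fun D (fun z => Num.min z.1 z.2 * F (Num.max z.1 z.2)).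
  apply: measurable_funM.
    by apply: measurable_minr; apply: measurable_funTS; [exact: measurable_fst|exact: measurable_snd].
  apply: (measurableT_comp (f := F)); first exact: nondecreasing_measurable.
  by apply: measurable_maxr; apply: measurable_funTS; [exact: measurable_fst|exact: measurable_snd].
apply: eq_measurable_fun mg.
move=> z; rewrite inE => Dz; have [/andP[x0 x1] /andP[y0 y1]] := HD z Dz.
rewrite /S_delta -!/(ff d _) /F.
case: (lerP z.2 z.1) => h.
  by rewrite (max_l x0) (min_l x1).
by rewrite (max_l y0) (min_l y1).
Qed.
Section PartD.
Variable n : nat.
Hypothesis n0 : (0 < n)%N.
Variable hh : nat -> R.

Definition EE a b : R := (minn a b)%:R / n%:R * hh (maxn a b).
Definition FF i j : R :=
  EE i.+1 j.+1 * (EE i.+1 j.+1 - EE i j.+1 - EE i.+1 j + EE i j).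

Lemma sum_nat1 m : 2 * \sum_(0 <= j < m) (j.+1)%:R = m%:R * (m.+1)%:R :> R.
Proof.
elim: m => [|m IH]; first by rewrite big_geq // mulr0 mul0r.
rewrite big_nat_recr //= mulrDr IH -!natr1; ring.
Qed.

Lemma nN0 : n%:R != 0 :> R.
Proof. by rewrite pnatr_eq0 -lt0n. Qed.

Lemma FF_row m j : (j < m)%N ->
  FF m j = (j.+1)%:R * (hh m.+1 * (hh m.+1 - hh m) / n%:R ^+ 2).
Proof.
move=> jm; rewrite /FF /EE.
have h1 : (j.+1 <= m.+1)%N by lia.
have h2 : (j.+1 <= m)%N by lia.
have h3 : (j <= m.+1)%N by lia.
have h4 : (j <= m)%N by lia.
rewrite (minn_idPr h1) (maxn_idPl h1) (minn_idPr h2) (maxn_idPl h2).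
rewrite (minn_idPr h3) (maxn_idPl h3) (minn_idPr h4) (maxn_idPl h4).
rewrite -natr1; field; exact: nN0.
Qed.

Lemma EE_sym a b : EE a b = EE b a.
Proof. by rewrite /EE minnC maxnC. Qed.

Lemma FF_col m i : (i < m)%N -> FF i m = FF m i.
Proof.
move=> _; rewrite /FF (EE_sym i.+1 m.+1) (EE_sym i m.+1) (EE_sym i.+1 m) (EE_sym i m).
ring.
Qed.

Lemma FF_diag m : FF m m = (m.+1)%:R * hh m.+1 *
   ((m.+1)%:R * hh m.+1 - 2 * m%:R * hh m.+1 + m%:R * hh m) / n%:R ^+ 2.
Proof.
rewrite /FF /EE !minnn !maxnn.
rewrite (minn_idPr (leqnSn m)) (maxn_idPl (leqnSn m)).
rewrite (minn_idPl (leqnSn m)) (maxn_idPr (leqnSn m)).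
field; exact: nN0.
Qed.

Lemma Qid m : \sum_(0 <= i < m) \sum_(0 <= j < m) FF i j =
  \sum_(0 <= k < m) (k.+1)%:R * hh k.+1 ^+ 2 / n%:R ^+ 2.
Proof.
elim: m => [|m IH]; first by rewrite !big_geq.
rewrite big_nat_recr //=.
under eq_bigr do rewrite big_nat_recr //=.
rewrite big_split /= IH big_nat_recr //= big_nat_recr //=.
set c := hh m.+1 * (hh m.+1 - hh m) / n%:R ^+ 2.
have e1 : \sum_(0 <= i < m) FF i m = \sum_(0 <= i < m) (i.+1)%:R * c.
  by apply: eq_big_nat => i /andP[_ im]; rewrite FF_col // FF_row.
have e2 : \sum_(0 <= i < m) FF m i = \sum_(0 <= i < m) (i.+1)%:R * c.
  by apply: eq_big_nat => i /andP[_ im]; rewrite FF_row.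
rewrite e1 e2.
rewrite -!mulr_suml FF_diag.
have S := sum_nat1 m.
set s := \sum_(0 <= j < m) _ in S *.
have -> : s = m%:R * (m.+1)%:R / 2.
  by rewrite -S mulrAC divff ?mul1r // pnatr_eq0.
rewrite -natr1 /c; field; exact: nN0.
Qed.
End PartD.
Section PartM2.
Variable n : nat.
Hypothesis n0 : (0 < n)%N.

Definition xg (k : nat) : R := k%:R / n%:R.
Definition G (k : nat) : set R := if k is 0 then set0 else `[0, xg k].
Definition cell (k : nat) : set R := G k.+1 `\` G k.

Lemma npos : 0 < n%:R :> R. Proof. by rewrite ltr0n. Qed.

Lemma xg0 : xg 0 = 0. Proof. by rewrite /xg mul0r. Qed.
Lemma xgn : xg n = 1. Proof. by rewrite /xg divff // gt_eqF // npos. Qed.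
Lemma xg_ge0 k : 0 <= xg k. Proof. by rewrite /xg divr_ge0 // ltW // npos. Qed.
Lemma xg_le a b : (a <= b)%N -> xg a <= xg b.
Proof. by move=> ab; rewrite /xg ler_pM2r ?invr_gt0 ?npos // ler_nat. Qed.
Lemma xg_le1 k : (k <= n)%N -> xg k <= 1.
Proof. by move=> kn; rewrite -xgn xg_le. Qed.
Lemma xgS k : xg k.+1 = xg k + 1 / n%:R.
Proof. by rewrite /xg -natr1 mulrDl. Qed.

Lemma G_meas k : measurable (G k).
Proof. by case: k => [|k] /=; [exact: measurable0|exact: measurable_itv]. Qed.

Lemma cell_meas k : measurable (cell k).
Proof. by apply: measurableD; exact: G_meas. Qed.

Lemma G_mono a b : (a <= b)%N -> G a `<=` G b.
Proof.
case: a => [|a] ab; first exact: sub0set.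
case: b ab => [//|b] ab x /=; rewrite !in_itv /= => /andP[x0 xa].
by rewrite x0 (le_trans xa) // xg_le.
Qed.

Lemma cell_in k x : cell k x -> [/\ 0 <= x, xg k <= x & x <= xg k.+1].
Proof.
rewrite /cell /setD /= in_itv /= => -[/andP[x0 x1] nG].
split => //; clear x1; case: k nG => [|k] nG; first by rewrite xg0.
by apply/ltW; rewrite ltNge; apply/negP => xk; apply: nG; rewrite /= in_itv /= x0.
Qed.

Lemma cell_disj i j : (i < j)%N -> cell i `&` cell j = set0.
Proof.
move=> ij; apply/seteqP; split => x //= [[ci _] [_ ncj]].
by apply: ncj; apply: (G_mono _ _ ij).
Qed.

Lemma cell_trivI i j : cell i `&` cell j !=set0 -> i = j.
Proof.
case=> x [ci cj]; case: (ltngtP i j) => // ij.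
  by have := cell_disj _ _ ij; move/seteqP => [/(_ x (conj ci cj))].
by have := cell_disj _ _ ij; move/seteqP => [/(_ x (conj cj ci))].
Qed.

Lemma bigU_cell m : \big[setU/set0]_(0 <= k < m) cell k = G m.
Proof.
elim: m => [|m IH]; first by rewrite big_geq.
by rewrite big_nat_recr //= IH /cell setDUK //; apply: G_mono.
Qed.

Lemma Gn : G n = `[0, 1]%classic.
Proof. rewrite /G; case E: n => [|m]; first by move: n0; rewrite E.
by rewrite -E xgn. Qed.


Section Meas.
Local Notation T := ((R * R)%type).
Variable mu : {measure set T -> \bar R}.
Hypothesis muT : mu setT = 1%E.

Lemma mu_le1 (A : set T) : measurable A -> (mu A <= 1)%E.
Proof. by move=> mA; rewrite -muT; apply: le_measure; rewrite ?inE. Qed.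

Lemma mu_fin (A : set T) : measurable A -> mu A \is a fin_num.
Proof.
move=> mA; rewrite ge0_fin_numE //.
exact: (le_lt_trans (mu_le1 _ mA) (ltry _)).
Qed.

Lemma mu_rect_diff (A A' B B' : set R) : measurable A -> measurable A' ->
  measurable B -> measurable B' -> A' `<=` A -> B' `<=` B ->
  fine (mu ((A `\` A') `*` (B `\` B'))) =
  fine (mu (A `*` B)) - fine (mu (A' `*` B)) - fine (mu (A `*` B')) + fine (mu (A' `*` B')).
Proof.
move=> mA mA' mB mB' sA sB.
have eD : (A `\` A') `*` (B `\` B') = (A `*` B) `\` (A' `*` B `|` A `*` B').
  apply/seteqP; split => -[x y] /=; rewrite /setX /setD /setU /=; tauto.
have sub : A' `*` B `|` A `*` B' `<=` A `*` B.
  by move=> -[x y] /= [[ax by_]|[ax by_]]; split => //; [exact: sA|exact: sB].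
have mX : measurable (A `*` B) by exact: measurableX.
have mP : measurable (A' `*` B) by exact: measurableX.
have mQ : measurable (A `*` B') by exact: measurableX.
have mPQ : measurable (A' `*` B') by exact: measurableX.
have ePQ : A' `*` B `&` A `*` B' = A' `*` B'.
  by rewrite -setXI (setIidl sA) (setIidr sB).
rewrite eD measureD //; last first.
  exact: (le_lt_trans (mu_le1 _ mX) (ltry _)).
  exact: measurableU.
have hU : mu (A' `*` B `|` A `*` B') = (mu (A' `*` B) + mu (A `*` B') - mu (A' `*` B `&` A `*` B'))%E.
  by apply: measureUfinl => //; exact: (le_lt_trans (mu_le1 _ mP) (ltry _)).
rewrite (setIidr sub).
rewrite [X in (_ - X)%E]hU.
rewrite ePQ.
have fX := mu_fin _ mX; have fP := mu_fin _ mP; have fQ := mu_fin _ mQ; have fPQ := mu_fin _ mPQ.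
rewrite fineB ?fin_numB ?fin_numD ?fX ?fP ?fQ ?fPQ //.
rewrite fineB ?fin_numD ?fX ?fP ?fQ ?fPQ //.
rewrite fineD ?fX ?fP ?fQ ?fPQ //.
ring.
Qed.
Lemma bigUX (s : seq nat) (F : nat -> set R) (Y : set R) :
  \big[setU/set0]_(k <- s) (F k `*` Y) = (\big[setU/set0]_(k <- s) F k) `*` Y.
Proof.
elim: s => [|a s IH]; first by rewrite !big_nil set0X.
rewrite !big_cons IH; apply/seteqP; split => -[x y] /=; rewrite /setU /setX /=; tauto.
Qed.

Lemma bigXU (s : seq nat) (F : nat -> set R) (X : set R) :
  \big[setU/set0]_(k <- s) (X `*` F k) = X `*` (\big[setU/set0]_(k <- s) F k).
Proof.
elim: s => [|a s IH]; first by rewrite !big_nil setX0.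
rewrite !big_cons IH; apply/seteqP; split => -[x y] /=; rewrite /setU /setX /=; tauto.
Qed.


Lemma int_decomp (f : T -> R) : measurable_fun (G n `*` G n) f ->
  (\int[mu]_(z in G n `*` G n) (f z)%:E =
  \sum_(0 <= i < n) \sum_(0 <= j < n) \int[mu]_(z in cell i `*` cell j) (f z)%:E)%E.
Proof.
move=> mf.
have eD : G n `*` G n = \big[setU/set0]_(0 <= i < n) (cell i `*` G n).
  by rewrite bigUX bigU_cell.
have H := @integral_bigsetU_EFin _ _ _ mu nat (fun i => cell i `*` G n) f (index_iota 0 n).
rewrite eD H /=; first last.
- by rewrite -eD; apply/measurable_EFinP.
- move=> i j _ _ [z [[ci _] [cj _]]]; apply: cell_trivI; exists z.1; split; eassumption.
- exact: iota_uniq.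
- by move=> i; apply: measurableX; [exact: cell_meas|exact: G_meas].
apply: eq_big_nat => i /andP[_ ilt].
have eD' : cell i `*` G n = \big[setU/set0]_(0 <= j < n) (cell i `*` cell j).
  by rewrite bigXU bigU_cell.
have H' := @integral_bigsetU_EFin _ _ _ mu nat (fun j => cell i `*` cell j) f (index_iota 0 n).
rewrite eD' H' //=.
- by move=> j; apply: measurableX; exact: cell_meas.
- exact: iota_uniq.
- move=> j k _ _ [z [[_ cj] [_ ck]]]; apply: cell_trivI; exists z.2; split; eassumption.
- rewrite -eD'; apply/measurable_EFinP; apply: measurable_funS mf => //.
    by apply: measurableX; exact: G_meas.
  move=> z [ci gz]; split => //.
  by case: ci => + _; apply: G_mono.
Qed.
Lemma cell_bound (A : set T) (g : T -> R) (c e : R) : measurable A ->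
  measurable_fun A g -> (forall z, A z -> 0 <= g z) ->
  (forall z, A z -> `|g z - c| <= e) ->
  (\int[mu]_(z in A) (g z)%:E)%E \is a fin_num /\
  `|fine (\int[mu]_(z in A) (g z)%:E)%E - c * fine (mu A)| <= e * fine (mu A).
Proof.
move=> mA mg g0 gb.
have fA := mu_fin _ mA.
set m := fine (mu A).
have m0 : 0 <= m by apply: fine_ge0.
have emA : mu A = m%:E by rewrite fineK.
have mg' : measurable_fun A (EFin \o g) by apply/measurable_EFinP.
have up : (\int[mu]_(z in A) (g z)%:E <= ((c + e) * m)%:E)%E.
  apply: (le_trans (y := (\int[mu]_(z in A) (cst (c + e)%:E z))%E)).
    apply: ge0_le_integral => //; try exact: measurable_cst;
      try (by move=> z Az; rewrite /= lee_fin g0).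
    move=> z Az; rewrite /= lee_fin.
    by have := gb z Az; rewrite ler_norml => /andP[_ h]; lra.
  by rewrite integral_cst // emA EFinM.
have lo : (((Num.max (c - e) 0) * m)%:E <= \int[mu]_(z in A) (g z)%:E)%E.
  apply: (le_trans (y := (\int[mu]_(z in A) (cst (Num.max (c - e) 0)%:E z))%E)).
    by rewrite integral_cst // emA EFinM.
  apply: ge0_le_integral => //; try exact: measurable_cst;
    try (by move=> z Az; rewrite /= lee_fin le_max lexx orbT).
  move=> z Az; rewrite /= lee_fin ge_max g0 // andbT.
  by have := gb z Az; rewrite ler_norml => /andP[h _]; lra.
have i0 : (0 <= \int[mu]_(z in A) (g z)%:E)%E.
  by apply: integral_ge0 => z Az; rewrite lee_fin g0.
have fI : (\int[mu]_(z in A) (g z)%:E)%E \is a fin_num.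
  by rewrite ge0_fin_numE // (le_lt_trans up) // ltry.
split => //.
move: up lo; rewrite -(fineK fI) !lee_fin.
set r := fine _ => up lo.
have : (c - e) * m <= Num.max (c - e) 0 * m by apply: ler_wpM2r => //; rewrite le_max lexx.
rewrite ler_norml /= => h; apply/andP; split; nra.
Qed.
Lemma cell_sub i : (i < n)%N -> cell i `<=` G n.
Proof. by move=> ilt x [ci _]; apply: (G_mono _ _ ilt). Qed.

Lemma cell_in01 i x : (i < n)%N -> cell i x -> 0 <= x <= 1 /\ `|x - xg i.+1| <= 1 / n%:R.
Proof.
move=> ilt /cell_in [x0 x1 x2]; have := xg_le1 _ ilt; have := xgS i => e h.
split; first by rewrite x0 (le_trans x2).
by rewrite ler_norml; apply/andP; split; lra.
Qed.

Lemma int_one : mu (G n `*` G n) = 1%E ->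
  \sum_(0 <= i < n) \sum_(0 <= j < n) fine (mu (cell i `*` cell j)) = 1.
Proof.
move=> mG.
have mGG : measurable (G n `*` G n) by apply: measurableX; exact: G_meas.
have := @int_decomp (fun _ => 1) (measurable_cst _).
rewrite (_ : (fun z => (1 : R)%:E) = cst 1%E) // integral_cst // mG mul1e.
under eq_big_nat => i /andP[_ ilt].
  under eq_big_nat => j /andP[_ jlt].
    rewrite integral_cst; last by apply: measurableX; exact: cell_meas.
    rewrite mul1e -(fineK (mu_fin _ (measurableX (cell_meas i) (cell_meas j)))).
  over.
  rewrite sumEFin.
over.
by rewrite sumEFin => -[].
Qed.
Lemma approx (g : R -> R -> R) : mu (G n `*` G n) = 1%E ->
  measurable_fun (G n `*` G n) (fun z => g z.1 z.2) ->
  (forall x y, 0 <= x <= 1 -> 0 <= y <= 1 -> 0 <= g x y) ->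
  (forall x y x' y', 0 <= x <= 1 -> 0 <= y <= 1 -> 0 <= x' <= 1 -> 0 <= y' <= 1 ->
     `|g x y - g x' y'| <= `|x - x'| + `|y - y'|) ->
  `|fine (\int[mu]_(z in G n `*` G n) (g z.1 z.2)%:E)%E -
    \sum_(0 <= i < n) \sum_(0 <= j < n)
       g (xg i.+1) (xg j.+1) * fine (mu (cell i `*` cell j))| <= 2 / n%:R.
Proof.
move=> mG mg g0 gl.
have CB i j : (i < n)%N -> (j < n)%N ->
  (\int[mu]_(z in cell i `*` cell j) (g z.1 z.2)%:E)%E \is a fin_num /\
  `|fine (\int[mu]_(z in cell i `*` cell j) (g z.1 z.2)%:E)%E -
     g (xg i.+1) (xg j.+1) * fine (mu (cell i `*` cell j))| <=
  2 / n%:R * fine (mu (cell i `*` cell j)).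
  move=> ilt jlt; apply: cell_bound.
  - by apply: measurableX; exact: cell_meas.
  - apply: measurable_funS mg; first by apply: measurableX; exact: G_meas.
    by move=> z [ci cj]; split; [exact: (cell_sub _ ilt)|exact: (cell_sub _ jlt)].
  - move=> z [ci cj]; have [h1 _] := cell_in01 _ _ ilt ci; have [h2 _] := cell_in01 _ _ jlt cj.
    exact: g0.
  - move=> z [ci cj]; have [h1 b1] := cell_in01 _ _ ilt ci; have [h2 b2] := cell_in01 _ _ jlt cj.
    have k1 : 0 <= xg i.+1 <= 1 by rewrite xg_ge0 xg_le1.
    have k2 : 0 <= xg j.+1 <= 1 by rewrite xg_ge0 xg_le1.
    apply: (le_trans (gl _ _ _ _ h1 h2 k1 k2)).
    by rewrite (_ : 2 / n%:R = 1 / n%:R + 1 / n%:R) ?lerD //; field; rewrite gt_eqF // npos.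
rewrite int_decomp //.
rewrite (eq_big_nat _ _ (F2 := fun i => (\sum_(0 <= j < n)
    fine (\int[mu]_(z in cell i `*` cell j) (g z.1 z.2)%:E)%E)%:E)); last first.
  move=> i /andP[_ ilt]; rewrite -sumEFin; apply: eq_big_nat => j /andP[_ jlt].
  by rewrite fineK //; case: (CB i j ilt jlt).
rewrite sumEFin /= -sumrB.
apply: (le_trans (ler_norm_sum _ _ _)).
apply: (le_trans (y := \sum_(0 <= i < n) \sum_(0 <= j < n) 2 / n%:R * fine (mu (cell i `*` cell j)))).
  apply: ler_sum_nat => i /andP[_ ilt]; rewrite -sumrB.
  apply: (le_trans (ler_norm_sum _ _ _)).
  by apply: ler_sum_nat => j /andP[_ jlt]; case: (CB i j ilt jlt).
under eq_bigr do rewrite -mulr_sumr.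
by rewrite -mulr_sumr int_one // mulr1.
Qed.
Lemma muG (C : R -> R -> R) :
  (forall x y, 0 <= x <= 1 -> 0 <= y <= 1 -> mu (`[0, x] `*` `[0, y]) = (C x y)%:E) ->
  (forall y, C 0 y = 0) -> (forall x, C x 0 = 0) ->
  forall a b, (a <= n)%N -> (b <= n)%N -> fine (mu (G a `*` G b)) = C (xg a) (xg b).
Proof.
move=> HC C0 C0' [|a] [|b] an bn /=.
- by rewrite set0X measure0 xg0 C0.
- by rewrite set0X measure0 xg0 C0.
- by rewrite setX0 measure0 xg0 C0'.
rewrite HC //; by rewrite xg_ge0 xg_le1.
Qed.

Lemma cell_mass (C : R -> R -> R) :
  (forall x y, 0 <= x <= 1 -> 0 <= y <= 1 -> mu (`[0, x] `*` `[0, y]) = (C x y)%:E) ->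
  (forall y, C 0 y = 0) -> (forall x, C x 0 = 0) ->
  forall i j, (i < n)%N -> (j < n)%N ->
  fine (mu (cell i `*` cell j)) =
  C (xg i.+1) (xg j.+1) - C (xg i) (xg j.+1) - C (xg i.+1) (xg j) + C (xg i) (xg j).
Proof.
move=> HC C0 C0' i j ilt jlt.
rewrite /cell mu_rect_diff; try exact: G_meas; try (apply: G_mono; exact: leqnSn).
by rewrite !(muG _ HC C0 C0') // ltnW.
Qed.
End Meas.
End PartM2.
Lemma ff_cont d : in_DLSL d -> forall a b, 0 < a -> a <= b -> b <= 1 ->
  0 <= ff d b - ff d a <= (b - a) / a.
Proof.
move=> H a b a0 ab b1.
have HD : in_D d by case: H.
have m := ff_mono H _ _ (ltW a0) ab b1.
have lp := ff_lip H _ _ a0 ab b1.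
have /andP[fa0 fa1] : 0 <= ff d a <= 1 by apply: (ff_bnd HD); rewrite (ltW a0) /= (le_trans ab b1).
rewrite subr_ge0 m /= ler_pdivlMr //; nra.
Qed.
Arguments ff_cont {d}.

Lemma hlow d1 d2 u0 : in_DLSL d1 -> in_DLSL d2 -> 0 < u0 -> u0 <= 1 ->
  let c := `|ff d1 u0 - ff d2 u0| in
  forall x, u0 - c * u0 / 8 <= x <= u0 ->
  c ^+ 2 / 4 <= (ff d1 x - ff d2 x) ^+ 2.
Proof.
move=> H1 H2 u00 u01 c x /andP[xl xu].
have HD1 : in_D d1 by case: H1.
have HD2 : in_D d2 by case: H2.
have hu : 0 <= u0 <= 1 by rewrite ltW.
have /andP[a0 a1] := ff_bnd HD1 u0 hu.
have /andP[b0 b1] := ff_bnd HD2 u0 hu.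
have c0 : 0 <= c by exact: normr_ge0.
have c1 : c <= 1 by rewrite /c ler_norml; apply/andP; split; lra.
have x0 : u0 / 2 <= x by nra.
have xp : 0 < x by lra.
have /andP[e0 e1] := ff_cont H1 _ _ xp xu u01.
have /andP[g0 g1] := ff_cont H2 _ _ xp xu u01.
have q : (u0 - x) / x <= c / 4.
  by rewrite ler_pdivrMr //; nra.
have hd : `|(ff d1 u0 - ff d2 u0) - (ff d1 x - ff d2 x)| <= c / 4.
  by rewrite ler_norml; apply/andP; split; lra.
have tri := ler_normD ((ff d1 u0 - ff d2 u0) - (ff d1 x - ff d2 x)) (ff d1 x - ff d2 x).
rewrite subrK -/c in tri.
have hx : c / 2 <= `|ff d1 x - ff d2 x| by lra.
have -> : c ^+ 2 / 4 = (c / 2) ^+ 2 by field.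
rewrite -[X in _ <= X]real_normK ?num_real //.
by rewrite ler_sqr ?nnegrE //; lra.
Qed.
Lemma sum_low (n : nat) (u0 r c2 : R) (H : R -> R) : (0 < n)%N -> 0 < r ->
  r <= u0 / 2 -> u0 <= 1 -> 0 <= c2 -> 2 <= n%:R * r ->
  (forall x, u0 - r <= x <= u0 -> c2 <= H x ^+ 2) ->
  r * u0 * c2 / 4 <= \sum_(0 <= k < n) (k.+1)%:R * H (xg n k.+1) ^+ 2 / n%:R ^+ 2.
Proof.
move=> n0 r0 ru u1 c20 nr Hl.
have N0 : 0 < n%:R :> R by rewrite ltr0n.
set K := Num.truncn (n%:R * (u0 - r)).
set M := Num.truncn (n%:R * r).
have K1 : K%:R <= n%:R * (u0 - r) by rewrite truncn_le mulr_ge0 //; lra.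
have K2 : n%:R * (u0 - r) < K.+1%:R by apply: truncnS_gt.
have M1 : M%:R <= n%:R * r by rewrite truncn_le mulr_ge0 //; lra.
have M2 : n%:R * r < M.+1%:R by apply: truncnS_gt.
have KMn : (K + M <= n)%N.
  by rewrite -(ler_nat R) natrD; nra.
have tge0 k : 0 <= (k.+1)%:R * H (xg n k.+1) ^+ 2 / n%:R ^+ 2.
  apply: mulr_ge0; first by apply: mulr_ge0; [exact: ler0n|exact: sqr_ge0].
  by rewrite invr_ge0 exprn_ge0 // ltW.
rewrite (big_cat_nat _ (n := K)) //=; last exact: leq_trans (leq_addr M K) KMn.
rewrite [X in _ + X](big_cat_nat _ (n := K + M)) //= ?leq_addr //.
have s1 : 0 <= \sum_(0 <= k < K) (k.+1)%:R * H (xg n k.+1) ^+ 2 / n%:R ^+ 2.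
  by apply: sumr_ge0 => k _.
have s3 : 0 <= \sum_(K + M <= k < n) (k.+1)%:R * H (xg n k.+1) ^+ 2 / n%:R ^+ 2.
  by apply: sumr_ge0 => k _.
have s2 : \sum_(K <= k < K + M) (u0 * c2 / (2 * n%:R)) <=
    \sum_(K <= k < K + M) (k.+1)%:R * H (xg n k.+1) ^+ 2 / n%:R ^+ 2.
  apply: ler_sum_nat => k /andP[Kk kKM].
  have k1 : K.+1%:R <= k.+1%:R :> R by rewrite ler_nat.
  have k2 : k.+1%:R <= (K + M)%:R :> R by rewrite ler_nat.
  rewrite natrD in k2.
  have xk : u0 - r <= xg n k.+1 <= u0.
    rewrite /xg ler_pdivlMr // ler_pdivrMr //; apply/andP; split; nra.
  have hk := Hl _ xk.
  rewrite ler_pdivlMr ?exprn_gt0 //.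
  have e : u0 * c2 / (2 * n%:R) * n%:R ^+ 2 = u0 * c2 * n%:R / 2.
    by field; rewrite gt_eqF.
  rewrite e.
  have a0 : n%:R * (u0 / 2) <= n%:R * (u0 - r) by rewrite ler_pM2l //; lra.
  have a1 : n%:R * u0 / 2 <= k.+1%:R by rewrite -mulrA; lra.
  have a2 : 0 <= k.+1%:R :> R by exact: ler0n.
  nra.
rewrite sumr_const_nat addKn -(mulr_natl (u0 * c2 / (2 * n%:R)) M) in s2.
have : r * u0 * c2 / 4 <= M%:R * (u0 * c2 / (2 * n%:R)).
  have e : M%:R * (u0 * c2 / (2 * n%:R)) = (M%:R / n%:R) * (u0 * c2 / 2).
    by field; rewrite gt_eqF.
  rewrite e.
  have : r / 2 <= M%:R / n%:R by rewrite ler_pdivlMr //; nra.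
  have : 0 <= u0 * c2 / 2 by rewrite !mulr_ge0 //; lra.
  move=> h1 h2.
  have -> : r * u0 * c2 / 4 = r / 2 * (u0 * c2 / 2) by field.
  exact: ler_wpM2r.
lra.
Qed.
Definition qq (n : nat) (g C : R -> R -> R) : R :=
  \sum_(0 <= i < n) \sum_(0 <= j < n) g (xg n i.+1) (xg n j.+1) *
    (C (xg n i.+1) (xg n j.+1) - C (xg n i) (xg n j.+1) - C (xg n i.+1) (xg n j) + C (xg n i) (xg n j)).

Lemma approx_q (n : nat) (mu' : {measure set T -> \bar R}) (g : R -> R -> R) :
  (0 < n)%N -> assoc_measure mu' g ->
  measurable_fun (G n n `*` G n n) (fun z => g z.1 z.2) ->
  (forall x y, 0 <= x <= 1 -> 0 <= y <= 1 -> 0 <= g x y) ->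
  (forall x y x' y', 0 <= x <= 1 -> 0 <= y <= 1 -> 0 <= x' <= 1 -> 0 <= y' <= 1 ->
     `|g x y - g x' y'| <= `|x - x'| + `|y - y'|) ->
  (forall y, g 0 y = 0) -> (forall x, g x 0 = 0) -> g 1 1 = 1 ->
  `|Rintegral mu' (@unit_sq R) (fun z => g z.1 z.2) - qq n g g| <= 2 / n%:R.
Proof.
move=> n0 [muT HC] mg g0 gl g0y gx0 g11.
have mG : mu' (G n n `*` G n n) = 1%E.
  by rewrite (@Gn n n0) HC ?g11 // ler01 lexx.
have := @approx n n0 mu' muT g mG mg g0 gl.
rewrite /Rintegral /unit_sq -(@Gn n n0).
suff -> : \sum_(0 <= i < n) \sum_(0 <= j < n)
       g (xg n i.+1) (xg n j.+1) * fine (mu' (cell n i `*` cell n j)) = qq n g g by [].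
apply: eq_big_nat => i /andP[_ ilt]; apply: eq_big_nat => j /andP[_ jlt].
by rewrite (@cell_mass n n0 mu' muT g HC g0y gx0 i j ilt jlt).
Qed.

Lemma qq_mix (n : nat) (l : R) (A B : R -> R -> R) :
  l * qq n A A + (1 - l) * qq n B B - qq n (mixC l A B) (mixC l A B) =
  l * (1 - l) * qq n (fun x y => A x y - B x y) (fun x y => A x y - B x y).
Proof.
rewrite /qq !mulr_sumr -big_split -sumrB /=.
apply: eq_bigr => i _.
rewrite !mulr_sumr -big_split -sumrB /=.
apply: eq_bigr => j _.
rewrite /mixC; ring.
Qed.
Lemma d0 d : in_D d -> d 0 = 0.
Proof.
case=> Hr Hle _ _ _; have h : 0 <= (0:R) <= 1 by rewrite lexx ler01.
by apply/eqP; rewrite eq_le Hle //=; case/andP: (Hr 0 h).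
Qed.

Lemma mix_props (l : R) (A B : R -> R -> R) : 0 <= l <= 1 ->
  (forall x y, 0 <= x <= 1 -> 0 <= y <= 1 -> 0 <= A x y) ->
  (forall x y, 0 <= x <= 1 -> 0 <= y <= 1 -> 0 <= B x y) ->
  (forall x y x' y', 0 <= x <= 1 -> 0 <= y <= 1 -> 0 <= x' <= 1 -> 0 <= y' <= 1 ->
     `|A x y - A x' y'| <= `|x - x'| + `|y - y'|) ->
  (forall x y x' y', 0 <= x <= 1 -> 0 <= y <= 1 -> 0 <= x' <= 1 -> 0 <= y' <= 1 ->
     `|B x y - B x' y'| <= `|x - x'| + `|y - y'|) ->
  (forall x y, 0 <= x <= 1 -> 0 <= y <= 1 -> 0 <= mixC l A B x y) /\
  (forall x y x' y', 0 <= x <= 1 -> 0 <= y <= 1 -> 0 <= x' <= 1 -> 0 <= y' <= 1 ->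
     `|mixC l A B x y - mixC l A B x' y'| <= `|x - x'| + `|y - y'|).
Proof.
move=> /andP[l0 l1] A0 B0 Al Bl; split.
  move=> x y hx hy; rewrite /mixC; apply: addr_ge0; apply: mulr_ge0; rewrite ?subr_ge0 //.
  - exact: A0.
  - exact: B0.
move=> x y x' y' hx hy hx' hy'; rewrite /mixC.
have -> : l * A x y + (1 - l) * B x y - (l * A x' y' + (1 - l) * B x' y') =
  l * (A x y - A x' y') + (1 - l) * (B x y - B x' y') by ring.
have l1' : 0 <= 1 - l by rewrite subr_ge0.
apply: (le_trans (ler_normD _ _)); rewrite !normrM (ger0_norm l0) (ger0_norm l1').
have := Al _ _ _ _ hx hy hx' hy'; have := Bl _ _ _ _ hx hy hx' hy'.
move=> b a.
have : l * `|A x y - A x' y'| <= l * (`|x - x'| + `|y - y'|) by rewrite ler_wpM2l.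
have : (1 - l) * `|B x y - B x' y'| <= (1 - l) * (`|x - x'| + `|y - y'|) by rewrite ler_wpM2l // subr_ge0.
lra.
Qed.
Lemma main_aux (d1 d2 : R -> R) (l : R) (mu1 mu2 mu : {measure set T -> \bar R}) :
  in_DLSL d1 -> in_DLSL d2 ->
  (exists u, 0 <= u <= 1 /\ d1 u <> d2 u) ->
  0 < l < 1 ->
  assoc_measure mu1 (S_delta d1) ->
  assoc_measure mu2 (S_delta d2) ->
  assoc_measure mu (mixC l (S_delta d1) (S_delta d2)) ->
  kendall_tau mu (mixC l (S_delta d1) (S_delta d2)) <
    l * kendall_tau mu1 (S_delta d1) + (1 - l) * kendall_tau mu2 (S_delta d2).
Proof.
move=> H1 H2 [u0 [/andP[u00 u01] hneq]] /andP[l0 l1] A1 A2 A3.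
have HD1 : in_D d1 by case: H1.
have HD2 : in_D d2 by case: H2.
have u0p : 0 < u0.
  rewrite lt_neqAle u00 andbT eq_sym; apply/eqP => e.
  by apply: hneq; rewrite e !d0.
have hu : 0 <= u0 <= 1 by rewrite u00 u01.
set c := `|ff d1 u0 - ff d2 u0|.
have cp : 0 < c.
  rewrite normr_gt0 /ff -mulrBl; apply: mulf_neq0.
    by rewrite subr_eq0; apply/eqP.
  by rewrite invr_eq0 gt_eqF.
have c1 : c <= 1.
  have /andP[a0 a1] := ff_bnd HD1 u0 hu; have /andP[b0 b1] := ff_bnd HD2 u0 hu.
  by rewrite /c ler_norml; apply/andP; split; lra.
set r := c * u0 / 8.
have rp : 0 < r by rewrite /r divr_gt0 // mulr_gt0.
have ru : r <= u0 / 2 by rewrite /r; nra.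
set c2 := c ^+ 2 / 4.
have c20 : 0 <= c2 by rewrite /c2 divr_ge0 // sqr_ge0.
set ka := r * u0 * c2 / 4.
have kap : 0 < ka by rewrite /ka /c2 !divr_gt0 // ?mulr_gt0 // exprn_gt0.
set P := l * (1 - l).
have Pp : 0 < P by rewrite /P mulr_gt0 // subr_gt0.
set n := (Num.truncn (4 / (P * ka) + 2 / r)).+1.
have n0 : (0 < n)%N by [].
have np : 0 < n%:R :> R by rewrite ltr0n.
have nb : 4 / (P * ka) + 2 / r < n%:R by apply: truncnS_gt.
have P4 : 0 <= 4 / (P * ka) by rewrite divr_ge0 // ltW // mulr_gt0.
have r2 : 0 <= 2 / r by rewrite divr_ge0 // ltW.
have nr : 2 <= n%:R * r.
  have : 2 / r < n%:R by lra.
  by rewrite ltr_pdivrMr // mulrC => /ltW.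
have nP : 4 / n%:R < P * ka.
  have : 4 / (P * ka) < n%:R by lra.
  have PK : 0 < P * ka by rewrite mulr_gt0.
  rewrite ltr_pdivrMr // => h.
  by rewrite ltr_pdivrMr // mulrC.
set D := fun x y => S_delta d1 x y - S_delta d2 x y.
set hh := fun k => ff d1 (xg n k) - ff d2 (xg n k).
have eQ : qq n D D = \sum_(0 <= i < n) \sum_(0 <= j < n) FF n hh i j.
  apply: eq_bigr => i _; apply: eq_bigr => j _.
  by rewrite /D /FF /EE /hh /xg !S_grid.
have Qlow : ka <= qq n D D.
  rewrite eQ Qid //.
  apply: (@sum_low n u0 r c2 (fun x => ff d1 x - ff d2 x)) => //.
  move=> x hx; exact: (@hlow d1 d2 u0 H1 H2 u0p u01 x hx).
have mGG : measurable (G n n `*` G n n) by apply: measurableX; exact: G_meas.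
have G01 : forall z, (G n n `*` G n n) z -> 0 <= z.1 <= 1 /\ 0 <= z.2 <= 1.
  by move=> z; rewrite (@Gn n n0) => -[/= a b]; move: a b; rewrite !in_itv.
have S0 d : in_D d -> forall x y, 0 <= x <= 1 -> 0 <= y <= 1 -> 0 <= S_delta d x y.
  by move=> HD x y hx hy; apply: S_ge0.
have SL d : in_DLSL d -> forall x y x' y', 0 <= x <= 1 -> 0 <= y <= 1 -> 0 <= x' <= 1 -> 0 <= y' <= 1 ->
     `|S_delta d x y - S_delta d x' y'| <= `|x - x'| + `|y - y'|.
  by move=> H x y x' y' hx hy hx' hy'; apply: S_lip.
have ap1 := @approx_q n _ _ n0 A1 (@S_meas d1 _ H1 mGG G01) (S0 _ HD1) (SL _ H1) (S_0y d1) (S_x0 d1) (@S_11 d1 HD1).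
have ap2 := @approx_q n _ _ n0 A2 (@S_meas d2 _ H2 mGG G01) (S0 _ HD2) (SL _ H2) (S_0y d2) (S_x0 d2) (@S_11 d2 HD2).
have l01 : 0 <= l <= 1 by rewrite ltW // ltW.
have [M0 ML] := @mix_props l _ _ l01 (S0 _ HD1) (S0 _ HD2) (SL _ H1) (SL _ H2).
have Mm : measurable_fun (G n n `*` G n n)
    (fun z => mixC l (S_delta d1) (S_delta d2) z.1 z.2).
  exact: (measurable_funD (measurable_funM (measurable_cst l) (@S_meas d1 _ H1 mGG G01))
            (measurable_funM (measurable_cst (1 - l)) (@S_meas d2 _ H2 mGG G01))).
have ap3 := @approx_q n _ _ n0 A3 Mm M0 ML.
have ap3' : `|Rintegral mu (@unit_sq R)
     (fun z => mixC l (S_delta d1) (S_delta d2) z.1 z.2) -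
     qq n (mixC l (S_delta d1) (S_delta d2)) (mixC l (S_delta d1) (S_delta d2))| <= 2 / n%:R.
  apply: ap3.
  - by move=> y; rewrite /mixC !S_0y; ring.
  - by move=> x; rewrite /mixC !S_x0; ring.
  - by rewrite /mixC !S_11 //; ring.
have qm := qq_mix n l (S_delta d1) (S_delta d2).
rewrite -/D in qm.
rewrite /kendall_tau.
move: ap1 ap2 ap3' qm Qlow.
set X1 := Rintegral mu1 _ _.
set X2 := Rintegral mu2 _ _.
set X := Rintegral mu _ _.
set q1 := qq n _ _.
set q2 := qq n _ _.
set q := qq n (mixC _ _ _) _.
set Q := qq n D D.
rewrite !ler_norml => /andP[a1 a2] /andP[b1 b2] /andP[e1 e2] qm Qlow.
have PQ : P * ka <= P * Q by rewrite ler_wpM2l // ltW.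
rewrite -/P in qm.
have : l * (X1 - q1) >= - (l * (2 / n%:R)) by nra.
have : (1 - l) * (X2 - q2) >= - ((1 - l) * (2 / n%:R)) by nra.
have e4 : 4 / n%:R = 2 * (2 / n%:R) :> R by rewrite mulrA -natrM.
nra.
Qed.
End Main.

Theorem mainTheorem8 (R : realType) (d1 d2 : R -> R) (l : R)
  (mu1 mu2 mu : {measure set (R * R)%type -> \bar R}) :
  in_DLSL d1 -> in_DLSL d2 ->
  (exists u, 0 <= u <= 1 /\ d1 u <> d2 u) ->
  0 < l < 1 ->
  assoc_measure mu1 (S_delta d1) ->
  assoc_measure mu2 (S_delta d2) ->
  assoc_measure mu (mixC l (S_delta d1) (S_delta d2)) ->
  kendall_tau mu (mixC l (S_delta d1) (S_delta d2)) <
    l * kendall_tau mu1 (S_delta d1) + (1 - l) * kendall_tau mu2 (S_delta d2).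
Proof. exact: main_aux. Qed.
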